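(* For an integer $p\ge4$, let $G^I_p$ be the graph with vertex set $\{v_0,\dots,v_{p-1}\}$ and edge set $\{v_0v_3\}\cup\{v_iv_{i+1}: 0\le i\le p-2\}\cup\{v_iv_{i+2}:0\le i\le p-3\}$. If $p=4q+4$ with $q$ a nonnegative integer, then the contracted solution graph $\mathcal{C}^c_4(G^I_p,\{v_{p-2},v_{p-1}\})$ has (at least) $4!$ components each having at least $2^q$ nodes.
   Context: A $k$-coloring of $G$ is a map $\alpha:V(G)\to\{1,\dots,k\}$ with $\alpha(u)\ne\alpha(v)$ for all edges $uv$. The $k$-color graph $\mathcal{C}_k(G)$ has the $k$-colorings of $G$ as nodes, two adjacent iff they differ on exactly one vertex. For $T\subseteq V(G)$, each $k$-coloring $\gamma$ gets label $\gamma|_T$; a label component is a maximal set of $k$-colorings with the same label inducing a connected subgraph of $\mathcal{C}_k(G)$. The contracted solution graph $\mathcal{C}^c_k(G,T)$ is the labeled graph whose nodes correspond bijectively to the label components, distinct nodes adjacent iff some coloring in one component is adjacent in $\mathcal{C}_k(G)$ to some coloring in the other, each node labeled with the common label of its component. *)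

(* Defs.v *)
From mathcomp Require Import all_boot.
Set Implicit Arguments. Unset Strict Implicit. Unset Printing Implicit Defensive.

Section Recolouring.
Variables (n k : nat) (E : rel 'I_n) (T : {set 'I_n}).

Definition coloring := {ffun 'I_n -> 'I_k}.

Definition proper (c : coloring) : bool :=
  [forall u, forall v, E u v ==> (c u != c v)].

Definition cadj (a b : coloring) : bool :=
  [&& proper a, proper b & #|[set v | a v != b v]| == 1].

Definition same_label (a b : coloring) : bool := [forall x in T, a x == b x].

Definition lrel (a b : coloring) : bool := cadj a b && same_label a b.

Definition lcomp (a : coloring) : {set coloring} := [set b | connect lrel a b].

Definition cnodes : {set {set coloring}} :=
  [set lcomp a | a in [set c : coloring | proper c]].

Definition cgadj (N M : {set coloring}) : bool :=
  [&& N \in cnodes, M \in cnodes, N != M &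
      [exists a in N, exists b in M, cadj a b]].

Definition ccomp (N : {set coloring}) : {set {set coloring}} :=
  [set M in cnodes | connect cgadj N M].

End Recolouring.

(* the graph G^I_p on vertices v_0..v_{p-1} (v_i = i : 'I_p) *)
Definition GI_edge (p : nat) : rel 'I_p := fun u v =>
  let i := nat_of_ord u in let j := nat_of_ord v in
  [|| (i == 0) && (j == 3), (j == 0) && (i == 3),
      j == i.+1, i == j.+1, j == i.+2 | i == j.+2].

Definition GI_T (p : nat) : {set 'I_p} := [set x : 'I_p | p - 2 <= x].

Arguments proper : clear implicits.
Arguments cadj : clear implicits.
Arguments lcomp : clear implicits.
Arguments cnodes : clear implicits.
Arguments cgadj : clear implicits.
Arguments ccomp : clear implicits.
Arguments GI_edge : clear implicits.
Arguments GI_T : clear implicits.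

(* Main.v *)
Require Import Defs.
From mathcomp Require Import all_boot all_fingroup zify.
Require Import Defs.
Set Implicit Arguments. Unset Strict Implicit. Unset Printing Implicit Defensive.

Definition E' (i j : nat) : bool :=
  [|| (i == 0) && (j == 3), (j == 0) && (i == 3),
      j == i.+1, i == j.+1, j == i.+2 | i == j.+2].

Lemma E'P i j : E' i j <-> (i = 0 /\ j = 3 \/ j = 0 /\ i = 3 \/ j = i.+1 \/ i = j.+1 \/ j = i.+2 \/ i = j.+2).
Proof.
rewrite /E'; split.
  by case/or4P=> [/andP[/eqP-> /eqP->]|/andP[/eqP-> /eqP->]|/eqP->|/orP[/eqP->|/orP[/eqP->|/eqP->]]]; lia.
case=> [[-> ->]|[[-> ->]|[->|[->|[->|->]]]]]; rewrite ?eqxx ?orbT //.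
Qed.

Lemma E'_irr i : E' i i = false.
Proof. by apply/negP => /E'P; lia. Qed.

Lemma GI_edgeE p (u v : 'I_p) : GI_edge p u v = E' u v.
Proof. by []. Qed.

Section Gen.
Variables (n k : nat) (E : rel 'I_n) (T : {set 'I_n}).

Lemma in_lcomp (a : coloring n k) : a \in lcomp n k E T a.
Proof. by rewrite inE connect0. Qed.

Lemma lcomp_cnodes (a : coloring n k) : proper n k E a -> lcomp n k E T a \in cnodes n k E T.
Proof. by move=> pa; apply/imsetP; exists a; rewrite // inE. Qed.

Lemma cadj_ccomp (a b : coloring n k) : connect (cadj n k E) a b -> proper n k E a ->
  connect (cgadj n k E T) (lcomp n k E T a) (lcomp n k E T b).
Proof.
case/connectP=> s; elim: s a => [|y s IH] a /=; first by move=> _ -> _; exact: connect0.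
case/andP=> ay py lb pa.
have py' : proper n k E y by case/and3P: ay.
apply: connect_trans (IH y py lb py').
case: (eqVneq (lcomp n k E T a) (lcomp n k E T y)) => [->|ne]; first exact: connect0.
apply: connect1; rewrite /cgadj !lcomp_cnodes // ne /=.
apply/existsP; exists a; rewrite in_lcomp /=; apply/existsP; exists y; by rewrite in_lcomp.
Qed.

End Gen.

Notation col p := {ffun 'I_p -> 'I_4}.
Notation CA p := (cadj p 4 (GI_edge p)).
Notation PR p := (proper p 4 (GI_edge p)).

Lemma five (x1 x2 x3 x4 x5 : 'I_4) :
  uniq [:: x1; x2; x3; x4; x5] -> False.
Proof.
move=> U; have := max_card (mem [:: x1; x2; x3; x4; x5]).
by rewrite (card_uniqP U) card_ord.
Qed.

Lemma properP p (c : col p) : PR p c -> forall u v, GI_edge p u v -> c u != c v.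
Proof. by move=> /forallP H u v e; move/forallP: (H u) => /(_ v) /implyP; apply. Qed.

Lemma properI p (c : col p) : (forall u v, GI_edge p u v -> c u != c v) -> PR p c.
Proof. by move=> H; apply/forallP=> u; apply/forallP=> v; apply/implyP; apply: H. Qed.

Lemma cadj_other p (a b : col p) x y : CA p a b -> a x != b x -> y != x -> a y = b y.
Proof.
case/and3P=> _ _ /cards1P [z Hz] ne nyx.
have xz : x \in [set v | a v != b v] by rewrite inE.
rewrite Hz in_set1 in xz; move/eqP: xz => xz; subst z.
apply/eqP; apply: contraNT nyx => H.
have : y \in [set v | a v != b v] by rewrite inE.
by rewrite Hz in_set1.
Qed.

Lemma frozen_vertex p (a b : col p) (x u v w : 'I_p) : CA p a b ->
  GI_edge p x u -> GI_edge p x v -> GI_edge p x w ->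
  a u != a v -> a u != a w -> a v != a w -> a x = b x.
Proof.
move=> ab eu ev ew uv uw vw; apply/eqP/negPn/negP => ne.
have pa : PR p a by case/and3P: ab.
have pb : PR p b by case/and3P: ab.
have nx (y : 'I_p) : GI_edge p x y -> y != x.
  by move=> e; apply/eqP=> yx; move: e; rewrite yx GI_edgeE E'_irr.
have bu := cadj_other ab ne (nx _ eu).
have bv := cadj_other ab ne (nx _ ev).
have bw := cadj_other ab ne (nx _ ew).
apply: (@five (a x) (b x) (a u) (a v) (a w)).
rewrite /= !inE !negb_or ne uv uw vw (properP pa eu) (properP pa ev) (properP pa ew).
by rewrite bu bv bw (properP pb eu) (properP pb ev) (properP pb ew).
Qed.

Lemma cadj_K4 p (a b : col p.+1) : 4 <= p.+1 -> CA p.+1 a b ->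
  forall j : 'I_4, a (inord j) = b (inord j).
Proof.
move=> p4 ab.
have pa : PR p.+1 a by case/and3P: ab.
have e (i j : nat) : i < 4 -> j < 4 -> E' i j -> GI_edge p.+1 (inord i) (inord j).
  move=> hi hj hij; rewrite GI_edgeE !inordK //; lia.
have d (i j : nat) : i < 4 -> j < 4 -> E' i j -> a (inord i) != a (inord j).
  by move=> hi hj hij; apply: (properP pa); apply: e.
case=> [[|[|[|[|//]]]] /= _].
- by apply: (frozen_vertex (u := inord 1) (v := inord 2) (w := inord 3)) => //; [apply: e|apply: e|apply: e|apply: d|apply: d|apply: d].
- by apply: (frozen_vertex (u := inord 0) (v := inord 2) (w := inord 3)) => //; [apply: e|apply: e|apply: e|apply: d|apply: d|apply: d].
- by apply: (frozen_vertex (u := inord 0) (v := inord 1) (w := inord 3)) => //; [apply: e|apply: e|apply: e|apply: d|apply: d|apply: d].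
- by apply: (frozen_vertex (u := inord 0) (v := inord 1) (w := inord 2)) => //; [apply: e|apply: e|apply: e|apply: d|apply: d|apply: d].
Qed.

Lemma proper_hom p (c : col p.+1) (f : nat -> nat) : PR p.+1 c ->
  (forall j, j < p.+1 -> f j < p.+1) ->
  (forall i j, i < p.+1 -> j < p.+1 -> E' i j -> E' (f i) (f j)) ->
  PR p.+1 [ffun i : 'I_p.+1 => c (inord (f i))].
Proof.
move=> pc fb fh; apply: properI => u v e; rewrite !ffunE.
apply: (properP pc); rewrite GI_edgeE !inordK ?fb //; exact: fh.
Qed.

Lemma reach p m (a b : col p.+1) : 4 <= p.+1 - m -> PR p.+1 a -> PR p.+1 b ->
  (forall i : 'I_p.+1, i < p.+1 - m -> a i = b i) -> connect (CA p.+1) a b.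
Proof.
elim: m a b => [|m IH] a b h pa pb ag.
  have -> : a = b by apply/ffunP => i; apply: ag; rewrite subn0 ltn_ord.
  exact: connect0.
set s := p.+1 - m.+1.
have sp : s < p.+1 by rewrite /s; lia.
have s4 : 4 <= s by [].
pose so : 'I_p.+1 := Ordinal sp.
have IH' (x y : col p.+1) : PR p.+1 x -> PR p.+1 y ->
    (forall i : 'I_p.+1, i <= s -> x i = y i) -> connect (CA p.+1) x y.
  move=> px py ag'; apply: IH => // [|i hi]; first by rewrite /s in s4; lia.
  by apply: ag'; rewrite /s; lia.
case: (eqVneq (a so) (b so)) => [eq|ne].
  apply: IH' => // i; rewrite leq_eqVlt; case/orP => [/eqP hi|hi]; last exact: ag.
  by have -> : i = so by apply: val_inj.
pose f j := if j <= s then j else s - 2 + (j + 2 - s) %% 3.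
have fb j : j < p.+1 -> f j < p.+1 by rewrite /f; case: ifP; lia.
have fle j : f j <= s by rewrite /f; case: ifP; lia.
have fid j : j <= s -> f j = j by rewrite /f => ->.
have fh i j : i < p.+1 -> j < p.+1 -> E' i j -> E' (f i) (f j).
  move=> hi hj /E'P H; apply/E'P; rewrite /f; case: ifP; case: ifP; lia.
pose a' := [ffun i : 'I_p.+1 => a (inord (f i))].
have pa' : PR p.+1 a' := proper_hom pa fb fh.
have aa' : connect (CA p.+1) a a'.
  by apply: IH' => // i hi; rewrite ffunE fid // inord_val.
pose a'' := [ffun i : 'I_p.+1 => if val i == s then b i else a (inord (f i))].
have key (u v : 'I_p.+1) : val u = s -> GI_edge p.+1 u v -> b u != a (inord (f v)).
  move=> us e.
  have := fh u v (ltn_ord u) (ltn_ord v) e; rewrite fid ?us // => e'.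
  have fvs : f v < s.
    rewrite ltn_neqAle fle andbT; apply/eqP => fv; by rewrite fv E'_irr in e'.
  rewrite ag; last by rewrite inordK //; lia.
  apply: (properP pb); rewrite GI_edgeE inordK ?us //; lia.
have pa'' : PR p.+1 a''.
  apply: properI => u v e; rewrite !ffunE.
  case: (val u =P s) => us; case: (val v =P s) => vs.
  - by move: e; rewrite GI_edgeE us vs E'_irr.
  - exact: key.
  - rewrite eq_sym; apply: key => //; move: e; rewrite !GI_edgeE => /E'P H; apply/E'P; lia.
  - by have := properP pa' e; rewrite !ffunE.
have ca : CA p.+1 a' a''.
  rewrite /cadj pa' pa'' /=; apply/eqP.
  have -> : [set v | a' v != a'' v] = [set so]; last exact: cards1.
  apply/setP => v; rewrite !inE !ffunE.
  case: (val v =P s) => vs.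
    have -> : v = so by apply: val_inj.
    rewrite eqxx /= fid //.
    have -> : (inord s : 'I_p.+1) = so by apply: val_inj; rewrite /= inordK.
    by [].
  move: (a (inord (f v))) => z; rewrite eqxx; apply/esym/eqP => vso; apply: vs; by rewrite vso.
have a''b : connect (CA p.+1) a'' b.
  apply: IH' => // i hi; rewrite ffunE; case: (val i =P s) => //= hs.
  rewrite fid // inord_val; apply: ag; rewrite /s in hs hi *; lia.
exact: connect_trans aa' (connect_trans (connect1 ca) a''b).
Qed.

Definition sw q (S : {set 'I_q}) (m : nat) : bool :=
  [exists k : 'I_q, (k \in S) && (k.+1 == m)].

Definition gS q (S : {set 'I_q}) (i : nat) : nat :=
  if i %% 4 < 2 then i %% 4 else if sw S (i %/ 4) then 5 - i %% 4 else i %% 4.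

Definition fam p q (s : {perm 'I_4}) (S : {set 'I_q}) : col p.+1 :=
  [ffun i : 'I_p.+1 => s (inord (gS S i))].

Lemma gS_lt4 q (S : {set 'I_q}) i : gS S i < 4.
Proof. rewrite /gS; case: ifP => h1; [|case: (sw S _)]. - lia. - lia. - lia. Qed.

Lemma sw0 q (S : {set 'I_q}) : sw S 0 = false.
Proof. by apply/existsP => [[k /andP[_ /eqP]]]. Qed.

Lemma swE q (S : {set 'I_q}) (k : 'I_q) : sw S k.+1 = (k \in S).
Proof.
apply/existsP/idP => [[k' /andP[h /eqP [e]]]|h]; last by exists k; rewrite h eqxx.
by have -> : k = k' by apply: val_inj.
Qed.

Lemma gS_small q (S : {set 'I_q}) i : i < 4 -> gS S i = i.
Proof.
move=> hi; rewrite /gS.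
have -> : i %/ 4 = 0 by lia.
rewrite sw0; case: ifP; lia.
Qed.

Lemma gS_ne q (S : {set 'I_q}) u v : u %% 4 <> v %% 4 ->
  (u %/ 4 = v %/ 4 \/ u %% 4 < 2 \/ v %% 4 < 2) -> gS S u != gS S v.
Proof.
move=> ne H; apply/eqP; rewrite /gS; case: H => [e|H].
  by rewrite e; case: (sw S _); case: ifP; case: ifP; lia.
by case: (sw S (u %/ 4)); case: (sw S (v %/ 4)); case: ifP; case: ifP; lia.
Qed.

Lemma fam_ne p q s (S : {set 'I_q}) (u v : 'I_p.+1) :
  gS S u != gS S v -> fam p s S u != fam p s S v.
Proof.
move=> ne; rewrite !ffunE (inj_eq perm_inj); apply: contra ne.
by move/eqP/(congr1 val); rewrite /= !inordK ?gS_lt4 // => ->.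
Qed.

Lemma fam_proper p q s (S : {set 'I_q}) : PR p.+1 (fam p s S).
Proof.
apply: properI => u v; rewrite GI_edgeE => /E'P H.
by apply: fam_ne; apply: gS_ne; lia.
Qed.

Lemma fam_fix p q s (S : {set 'I_q}) (b : col p.+1) (x : 'I_p.+1) :
  4 <= p.+1 -> x < p.+1 - 2 -> CA p.+1 (fam p s S) b -> fam p s S x = b x.
Proof.
move=> h4 hx ab.
have E1 (i j : nat) : i < p.+1 -> j < p.+1 ->
   (i = 0 /\ j = 3 \/ j = 0 /\ i = 3 \/ j = i.+1 \/ i = j.+1 \/ j = i.+2 \/ i = j.+2) ->
   GI_edge p.+1 (inord i) (inord j).
  by move=> hi hj H; rewrite GI_edgeE !inordK //; apply/E'P.
have D (i j : nat) : i < p.+1 -> j < p.+1 -> i %% 4 <> j %% 4 ->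
   (i %/ 4 = j %/ 4 \/ i %% 4 < 2 \/ j %% 4 < 2) ->
   fam p s S (inord i) != fam p s S (inord j).
  by move=> hi hj h1 h2; apply: fam_ne; rewrite !inordK //; apply: gS_ne.
have -> : x = inord (nat_of_ord x) by rewrite inord_val.
move: hx; move: (nat_of_ord x) => xv hx.
have : (xv = 0 \/ xv %% 4 = 0 /\ 4 <= xv) \/ xv %% 4 = 1 \/ xv %% 4 = 2 \/ xv %% 4 = 3 by lia.
case=> [[h|h]|[h|[h|h]]].
- apply: (frozen_vertex (u := inord xv.+1) (v := inord xv.+2) (w := inord xv.+3)) => //;
   [apply: E1|apply: E1|apply: E1|apply: D|apply: D|apply: D]; lia.
- apply: (frozen_vertex (u := inord (xv - 2)) (v := inord (xv - 1)) (w := inord xv.+1)) => //;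
   [apply: E1|apply: E1|apply: E1|apply: D|apply: D|apply: D]; lia.
- apply: (frozen_vertex (u := inord (xv - 1)) (v := inord xv.+1) (w := inord xv.+2)) => //;
   [apply: E1|apply: E1|apply: E1|apply: D|apply: D|apply: D]; lia.
- apply: (frozen_vertex (u := inord (xv - 2)) (v := inord (xv - 1)) (w := inord xv.+1)) => //;
   [apply: E1|apply: E1|apply: E1|apply: D|apply: D|apply: D]; lia.
- apply: (frozen_vertex (u := inord (xv - 2)) (v := inord (xv - 1)) (w := inord xv.+1)) => //;
   [apply: E1|apply: E1|apply: E1|apply: D|apply: D|apply: D]; lia.
Qed.

Lemma fam_frozen p q s (S : {set 'I_q}) (b : col p.+1) : 4 <= p.+1 ->
  lrel (GI_edge p.+1) (GI_T p.+1) (fam p s S) b -> False.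
Proof.
move=> h4; case/andP => ab sl.
have E : fam p s S = b.
  apply/ffunP => x; case: (ltnP x (p.+1 - 2)) => hx; first exact: fam_fix.
  by move/forallP: sl => /(_ x); rewrite /GI_T inE hx /= => /eqP.
case/and3P: ab => _ _; rewrite -E.
have -> : [set v | fam p s S v != fam p s S v] = set0.
  by apply/setP => v; rewrite !inE eqxx.
by rewrite cards0.
Qed.

Lemma lcomp_fam p q s (S : {set 'I_q}) : 4 <= p.+1 ->
  lcomp p.+1 4 (GI_edge p.+1) (GI_T p.+1) (fam p s S) = [set fam p s S].
Proof.
move=> h4; apply/setP => y; rewrite inE in_set1; apply/idP/eqP => [|->]; last exact: connect0.
case/connectP => [[|z r]] /=; first by move=> _ ->.
by case/andP => /(fam_frozen h4).
Qed.

Lemma fam_inj p q s : p.+1 = 4 * q + 4 -> injective (@fam p q s).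
Proof.
move=> hp.
suff H (S S' : {set 'I_q}) k : fam p s S = fam p s S' -> k \in S -> k \in S'.
  by move=> S S' e; apply/setP => k; apply/idP/idP; apply: H.
move=> e kS; apply/negPn/negP => kS'.
have hi : 4 * k + 6 < p.+1 by have := ltn_ord k; lia.
have := congr1 (fun f : col p.+1 => f (inord (4 * k + 6))) e.
rewrite /= !ffunE inordK // => /perm_inj /(congr1 val); rewrite /= !inordK ?gS_lt4 //.
rewrite /gS; have -> : (4 * k + 6) %% 4 = 2 by lia.
have -> : (4 * k + 6) %/ 4 = k.+1 by lia.
by rewrite !swE kS (negbTE kS').
Qed.

Notation LC p := (lcomp p 4 (GI_edge p) (GI_T p)).

Lemma lrel_K4 p (x y : col p.+1) : 4 <= p.+1 ->
  connect (lrel (GI_edge p.+1) (GI_T p.+1)) x y -> forall j : 'I_4, x (inord j) = y (inord j).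
Proof.
move=> h4 /connectP [r]; elim: r x => [|z r IH] x /=; first by move=> _ ->.
case/andP => /andP [xz _] pz ly j.
by rewrite (cadj_K4 h4 xz) (IH z pz ly).
Qed.

Lemma ccomp_K4 p (a0 : col p.+1) : 4 <= p.+1 ->
  forall M, M \in ccomp p.+1 4 (GI_edge p.+1) (GI_T p.+1) (LC p.+1 a0) ->
  forall c, c \in M -> forall j : 'I_4, c (inord j) = a0 (inord j).
Proof.
move=> h4 M; rewrite inE => /andP [_ /connectP [r]].
have : forall c, c \in LC p.+1 a0 -> forall j : 'I_4, c (inord j) = a0 (inord j).
  by move=> c; rewrite inE => /(lrel_K4 h4) H j; rewrite H.
elim: r (LC p.+1 a0) => [|M1 r IH] N HN /=; first by move=> _ ->.
case/andP => /and4P [_ cM1 _ /existsP [a /andP [aN /existsP [b /andP [bM1 ab]]]]] pM1 lM.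
apply: (IH M1) => // c cM j.
case/imsetP: cM1 => m _ eM; move: cM bM1; rewrite eM !inE => cM bM1.
rewrite -(lrel_K4 h4 cM) (lrel_K4 h4 bM1) -(cadj_K4 h4 ab).
exact: HN.
Qed.

Theorem proposition5 (p q : nat) :
  p = 4 * q + 4 ->
  exists C : {set {set {set {ffun 'I_p -> 'I_4}}}},
    4`! <= #|C| /\
    forall K, K \in C ->
      (exists2 N, N \in cnodes p 4 (GI_edge p) (GI_T p) & K = ccomp p 4 (GI_edge p) (GI_T p) N)
      /\ 2 ^ q <= #|K|.
Proof.
move=> ->.
have -> : 4 * q + 4 = (4 * q + 3).+1 by rewrite addnS.
clear p; set p := 4 * q + 3.
have hp : p.+1 = 4 * q + 4 by rewrite /p; lia.
have h4 : 4 <= p.+1 by lia.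
have hj (j : 'I_4) : j < p.+1 by have := ltn_ord j; lia.
exists [set ccomp p.+1 4 (GI_edge p.+1) (GI_T p.+1) (LC p.+1 (fam p s (set0 : {set 'I_q})))
         | s in perm_on [set: 'I_4]].
split.
  rewrite card_in_imset ?card_perm ?cardsT ?card_ord // => s t _ _ e.
  apply/permP => j.
  have Ns : LC p.+1 (fam p s (set0 : {set 'I_q})) \in
      ccomp p.+1 4 (GI_edge p.+1) (GI_T p.+1) (LC p.+1 (fam p t (set0 : {set 'I_q}))).
    by rewrite -e inE lcomp_cnodes ?fam_proper // connect0.
  have := ccomp_K4 h4 Ns (in_lcomp _ _ _) j.
  by rewrite !ffunE !inordK ?gS_small ?inord_val.
move=> K /imsetP [s _ ->]; split.
  by exists (LC p.+1 (fam p s (set0 : {set 'I_q}))); rewrite ?lcomp_cnodes ?fam_proper.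
have sub : [set LC p.+1 (fam p s S) | S in powerset [set: 'I_q]] \subset
    ccomp p.+1 4 (GI_edge p.+1) (GI_T p.+1) (LC p.+1 (fam p s (set0 : {set 'I_q}))).
  apply/subsetP => N /imsetP [S _ ->].
  rewrite inE lcomp_cnodes ?fam_proper //=.
  apply: cadj_ccomp; last exact: fam_proper.
  apply: (@reach p (p.+1 - 4)); rewrite ?fam_proper //; first lia.
  move=> i hi; rewrite !ffunE !gS_small //; lia.
apply: leq_trans (subset_leq_card sub).
rewrite card_in_imset ?card_powerset ?cardsT ?card_ord // => S S' _ _.
rewrite !lcomp_fam // => /set1_inj; exact: fam_inj.
Qed.
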